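(* Let $X$ be a compactum, let $n\geq2$, and let $f:X\to X$ be a function. Consider the statements: (1) $f$ is Touhey; (2) $F_n(f)$ is Touhey; (3) $SF_n(f)$ is Touhey. Then (2) and (3) are equivalent and (2) implies (1). Moreover, (1) does not imply (2) in general: there exist such $X$, $n$, $f$ with $f$ Touhey but $F_n(f)$ not Touhey.
   Context: A compactum is a nondegenerate compact, perfect, Hausdorff topological space. $F_n(X)$ is the set of nonempty subsets of $X$ with at most $n$ points, with the Vietoris topology; $F_1(X)=\{\{x\}:x\in X\}$; $F_n(f)(A)=f(A)$. $SF_n(X)=F_n(X)/F_1(X)$ is the quotient collapsing $F_1(X)$ to a point, $q$ the quotient map, $F_X=q(F_1(X))$, and $SF_n(f)(\chi)=q(F_n(f)(q^{-1}(\chi)))$ for $\chi\neq F_X$, $SF_n(f)(F_X)=F_X$. A function $g:Z\to Z$ is Touhey if for every pair of nonempty open $U,V\subseteq Z$ there exist a periodic point $z\in U$ (i.e. $g^m(z)=z$ for some $m\in\mathbb{N}$) and $k\in\mathbb{Z}_+$ with $g^k(z)\in V$. *)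

(* Defs.v *)
From Stdlib Require List.
From HB Require Import structures.
From mathcomp Require Import all_boot all_order all_algebra.
From mathcomp Require Import all_classical all_reals all_analysis.
Set Implicit Arguments. Unset Strict Implicit. Unset Printing Implicit Defensive.
Import Order.TTheory GRing.Theory Num.Theory.
Local Open Scope classical_set_scope.

Definition compactum (X : topologicalType) : Prop :=
  [/\ compact [set: X], hausdorff_space X, perfect_set [set: X]
    & exists x y : X, x <> y].

Definition Touhey (Z : Type) (opn : set Z -> Prop) (g : Z -> Z) : Prop :=
  forall U V : set Z, opn U -> opn V -> U !=set0 -> V !=set0 ->
    exists z, U z /\ (exists m : nat, (0 < m)%N /\ iter m g z = z)
                  /\ (exists k : nat, V (iter k g z)).

Definition isFn (X : choiceType) (n : nat) (A : set X) : Prop :=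
  A !=set0 /\ exists s : seq X, (size s <= n)%N /\ A = [set x | x \in s].

Definition Fn (X : choiceType) (n : nat) := {A : set X | isFn n A}.

(* Vietoris basic open set <U_1,...,U_k> *)
Definition vbase (X : choiceType) (n : nat) (Us : seq (set X)) (B : Fn X n) : Prop :=
  (forall x, proj1_sig B x -> exists U, List.In U Us /\ U x) /\
  (forall U, List.In U Us -> exists x, proj1_sig B x /\ U x).

Definition VOpen (X : topologicalType) (n : nat) (O : set (Fn X n)) : Prop :=
  forall A, O A -> exists Us : seq (set X),
    (forall U, List.In U Us -> open U) /\ vbase Us A /\ (forall B, vbase Us B -> O B).

Lemma isFn_image (X : choiceType) (n : nat) (f : X -> X) (A : set X) :
  isFn n A -> isFn n (f @` A).
Proof.
move=> [[x Ax] [s [hs eA]]]; split; first by exists (f x), x.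
rewrite eA; exists (map f s); rewrite size_map; split => //.
apply/seteqP; split => y /=.
- by case=> z zs <-; exact: map_f.
- by move=> /mapP[z zs ->]; exists z.
Qed.

Definition Fn_map (X : choiceType) (n : nat) (f : X -> X) (A : Fn X n) : Fn X n :=
  exist _ (f @` proj1_sig A) (isFn_image f (proj2_sig A)).

Definition is_singleton (X : choiceType) (n : nat) (A : Fn X n) : Prop :=
  exists x, proj1_sig A = [set x].

(* SF_n(X) = F_n(X)/F_1(X): the collapsed point F_X is None, every other
   equivalence class is the singleton class of a non-singleton A, Some A. *)
Definition SFn (X : choiceType) (n : nat) :=
  option {A : Fn X n | ~ is_singleton A}.

Definition qmap (X : choiceType) (n : nat) (A : Fn X n) : SFn X n :=
  match pselect (is_singleton A) with
  | left _ => None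
  | right h => Some (exist _ A h)
  end.

Definition SOpen (X : topologicalType) (n : nat) (O : set (SFn X n)) : Prop :=
  @VOpen X n (@qmap X n @^-1` O).

Definition SFn_map (X : choiceType) (n : nat) (f : X -> X) (c : SFn X n) : SFn X n :=
  match c with
  | None => None
  | Some A => qmap (Fn_map f (proj1_sig A))
  end.

(* Main.v *)
Require Import Defs.
From HB Require Import structures.
From mathcomp Require Import all_boot all_order all_algebra.
From mathcomp Require Import all_classical all_reals all_analysis.
From mathcomp Require Import zify.
Set Implicit Arguments. Unset Strict Implicit. Unset Printing Implicit Defensive.
Local Open Scope classical_set_scope.

Section Gen.
Variables (X : choiceType) (n : nat) (f : X -> X).

Lemma Fn_iter k (A : Fn X n) :
  proj1_sig (iter k (Fn_map f) A) = iter k f @` proj1_sig A.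
Proof.
elim: k => [|k IH] /=.
  by apply/seteqP; split => y /=; [move=> Ay; exists y | case=> z Az <-].
rewrite IH; apply/seteqP; split => y /=.
  by case=> _ [z Az <-] <-; exists z.
by case=> z Az <-; exists (iter k f z) => //; exists z.
Qed.

Lemma iter_mul (g : X -> X) p m x : iter (p * m) g x = iter p (iter m g) x.
Proof. by elim: p => [|p IH] //=; rewrite mulSn iterD IH. Qed.

Lemma fin_periodic (g : X -> X) (A : set X) (s : seq X) :
  A = [set x | x \in s] -> (forall x, A x -> A (g x)) -> forall x, A x ->
  exists i p, (0 < p)%N /\ iter p g (iter i g x) = iter i g x.
Proof.
move=> eA gA x Ax.
have Ai : forall i, A (iter i g x) by elim => //= i IH; exact: gA.
pose t := [seq iter i g x | i <- iota 0 (size s).+1].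
have : ~~ uniq t.
  apply/negP => ut.
  have sub : {subset t <= s}.
    by move=> y /mapP [i _ ->]; have := Ai i; rewrite eA.
  by have := uniq_leq_size ut sub; rewrite size_map size_iota ltnn.
move/(uniqPn x) => [i [j [ij jt eij]]].
move: jt; rewrite size_map size_iota => jt.
have it : (i < (size s).+1)%N by apply: ltn_trans jt.
move: eij; rewrite !(nth_map 0) ?size_iota // !nth_iota // !add0n => eij.
exists i, (j - i); split; first by rewrite subn_gt0.
by rewrite -iterD subnK ?(ltnW ij).
Qed.

Definition mkFn (s : seq X) (hs : (size s <= n)%N) (x : X) (hx : x \in s) : Fn X n :=
  exist _ [set y | y \in s] (conj (ex_intro _ x hx) (ex_intro _ s (conj hs erefl))).

End Gen.

Section Q.
Variables (X : topologicalType) (n : nat) (f : X -> X).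

Lemma vbase_open (Us : seq (set X)) :
  (forall U, List.In U Us -> open U) -> VOpen (@vbase X n Us).
Proof. by move=> hU A hA; exists Us. Qed.

Lemma q_inj (A B : Fn X n) : ~ is_singleton A -> qmap B = qmap A -> B = A.
Proof.
rewrite /qmap => hA; case: (pselect (is_singleton A)) => [//|h].
case: (pselect (is_singleton B)) => [//|h'] e.
by case: e.
Qed.

Lemma q_comm (A : Fn X n) : qmap (Fn_map f A) = SFn_map f (qmap A).
Proof.
rewrite {2}/qmap; case: pselect => [[x hx]|h] //=.
rewrite /qmap; case: pselect => // h; exfalso; apply: h; exists (f x).
by rewrite /= hx image_set1.
Qed.

Lemma q_iter k (A : Fn X n) :
  qmap (iter k (Fn_map f) A) = iter k (SFn_map f) (qmap A).
Proof. by elim: k => //= k IH; rewrite q_comm IH. Qed.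

Lemma q_surj (x0 : X) (hn : (1 <= n)%N) (c : SFn X n) : exists A, qmap A = c.
Proof.
case: c => [[A hA]|].
  exists A; rewrite /qmap; case: pselect => // h; congr Some; congr exist.
  exact: Prop_irrelevance.
exists (mkFn (s:=[:: x0]) hn (mem_head x0 [::])).
rewrite /qmap; case: pselect => // h; exfalso; apply: h; exists x0.
by apply/seteqP; split => y /=; rewrite inE => /eqP.
Qed.

Lemma nbhs_W (x : X) (Us : seq (set X)) :
  (forall U, List.In U Us -> open U) ->
  nbhs x [set y | forall U, List.In U Us -> U x -> U y].
Proof.
elim: Us => [|U Us IH] hU.
  by apply: filterS filterT => y _ U [].
have hUs : forall V, List.In V Us -> open V by move=> V hV; apply: hU; right.
have h1 : nbhs x [set y | U x -> U y].
  have [Ux|nUx] := pselect (U x).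
    apply: filterS (open_nbhs_nbhs (conj (hU U (or_introl erefl)) Ux)).
    by move=> y Uy _.
  by apply: filterS filterT => y _ /nUx.
apply: filterS (filterI h1 (IH hUs)) => y [h h'] V /= [<-|hV]; first exact: h.
exact: h'.
Qed.

Lemma shrink (hn : (2 <= n)%N) (hX : hausdorff_space X)
    (hp : perfect_set [set: X]) (O : set (Fn X n)) (A : Fn X n) :
  VOpen O -> O A -> exists Us' : seq (set X),
    (forall U, List.In U Us' -> open U) /\ (exists B : Fn X n, vbase Us' B) /\
    (forall C : Fn X n, vbase Us' C -> O C /\ ~ is_singleton C).
Proof.
move=> hO /hO [Us [hUo [hA hsub]]].
have [B [hB [a [b [ab [Ba Bb]]]]]] : exists B : Fn X n, vbase Us B /\
    exists a b, a <> b /\ proj1_sig B a /\ proj1_sig B b.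
  have [x Ax] := (proj2_sig A).1.
  have [[y [Ay yx]]|nA] := pselect (exists y, proj1_sig A y /\ y <> x).
    by exists A; split => //; exists y, x.
  have eA : forall y, proj1_sig A y -> y = x.
    by move=> y Ay; apply: contrapT => yx; apply: nA; exists y.
  have lx : limit_point [set: X] x by rewrite hp.2.
  have [y [/eqP yx _ Wy]] := lx _ (nbhs_W x hUo).
  have s2 : (size [:: x; y] <= n)%N by [].
  exists (mkFn s2 (mem_head x [:: y])); split; last first.
    exists x, y; split; first by move=> e; apply: yx; rewrite e.
    by split; rewrite /= !inE eqxx ?orbT.
  split => /=.
    move=> z; rewrite !inE => /orP[] /eqP ->; have [U [hU Ux]] := hA.1 x Ax;
      exists U; split => //; exact: Wy.
  move=> U hU; have [z [Az Uz]] := hA.2 U hU; exists x; split.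
    by rewrite /= inE eqxx.
  by rewrite -(eA z Az).
move/eqP: ab; rewrite -[hausdorff_space X]/(hausdorff_space X) in hX.
move: hX; rewrite open_hausdorff => hX /hX [[Wa Wb] /= [aW bW] [oWa oWb /eqP dW]].
have [Ua [hUa Uaa]] := hB.1 a Ba.
have [Ub [hUb Ubb]] := hB.1 b Bb.
exists [:: Wa `&` Ua, Wb `&` Ub & Us]; split.
  move=> U /= [<-|[<-|hU]]; [exact: openI (hUo _ hUa)| exact: openI (hUo _ hUb) | exact: hUo].
split.
  exists B; split => /=.
    by move=> z /(hB.1 z) [U [hU Uz]]; exists U; split => //; right; right.
  move=> U [<-|[<-|hU]]; [by exists a; split => //; split => //; rewrite -inE|
    by exists b; split => //; split => //; rewrite -inE| exact: hB.2].
move=> C hC; split.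
  apply: hsub; split.
    move=> z /(hC.1 z) [U [/= [<-|[<-|hU]] Uz]].
    - by exists Ua; split => //; case: Uz.
    - by exists Ub; split => //; case: Uz.
    - by exists U.
  by move=> U hU; apply: hC.2; right; right.
move=> [c hc].
have [z1 [C1 [W1 _]]] := hC.2 _ (or_introl erefl).
have [z2 [C2 [W2 _]]] := hC.2 _ (or_intror (or_introl erefl)).
move: C1 C2; rewrite hc /= => e1 e2; subst z1 z2.
have : (Wa `&` Wb) c by [].
by rewrite dW.
Qed.

End Q.

Lemma part1 (X : topologicalType) (n : nat) (f : X -> X) :
  compactum X -> (2 <= n)%N ->
  (Touhey (@VOpen X n) (Fn_map f) <-> Touhey (@SOpen X n) (SFn_map f)) /\
  (Touhey (@VOpen X n) (Fn_map f) -> Touhey (@open X) f).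
Proof.
rewrite /compactum; move=> [_ hX hp [x0 [_ _]]] hn.
have hn1 : (1 <= n)%N by apply: ltnW.
split; [split|].
- move=> hT U V oU oV [c Uc] [d Vd].
  have [A qA] := q_surj x0 hn1 c.
  have [B qB] := q_surj x0 hn1 d.
  have [z [Uz [[m [m0 em]] [k Vk]]]] := hT _ _ oU oV
    (ex_intro _ A (eq_ind_r U Uc qA)) (ex_intro _ B (eq_ind_r V Vd qB)).
  exists (qmap z); split => //; split.
    by exists m; split => //; rewrite -q_iter em.
  by exists k; rewrite -q_iter.
- move=> hT U V oU oV [A UA] [B VB].
  have [Us [hUo [[A' hA'] hU]]] := shrink hn hX hp oU UA.
  have [Vs [hVo [[B' hB'] hV]]] := shrink hn hX hp oV VB.
  have oimg : forall (Ws : seq (set X)), (forall W, List.In W Ws -> open W) ->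
      (forall C : Fn X n, @vbase X n Ws C -> ~ is_singleton C) ->
      SOpen (@qmap X n @` @vbase X n Ws).
    move=> Ws hWo hWs C [D hD eD]; have eCD := q_inj (hWs D hD) (esym eD).
    subst C; exists Ws; split => //; split => // E hE; by exists E.
  have [c [[D hD <-] [[m [m0 em]] [k [E hE eE]]]]] := hT _ _
    (oimg Us hUo (fun C h => (hU C h).2)) (oimg Vs hVo (fun C h => (hV C h).2))
    (ex_intro _ _ (ex_intro2 _ _ A' hA' erefl))
    (ex_intro _ _ (ex_intro2 _ _ B' hB' erefl)).
  exists D; split; first exact: (hU D hD).1.
  split.
    exists m; split => //; apply: q_inj; first exact: (hU D hD).2.
    by rewrite q_iter em.
  exists k; rewrite (q_inj (hV E hE).2 (_ : qmap (iter k (Fn_map f) D) = qmap E)).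
    exact: (hV E hE).1.
  by rewrite q_iter.
- move=> hT U V oU oV [x Ux] [y Vy].
  have s1 : (size [:: x] <= n)%N by [].
  have s1' : (size [:: y] <= n)%N by [].
  have vb1 : forall (W : set X) (t : X) (h : (size [:: t] <= n)%N), W t ->
      vbase [:: W] (mkFn h (mem_head t [::])).
    move=> W t h Wt; split => /=.
      by move=> u; rewrite inE => /eqP ->; exists W; split => //; left.
    by move=> W' [<-|[]]; exists t; rewrite inE eqxx.
  have [z [Uz [[m [m0 em]] [k Vk]]]] := hT _ _
    (vbase_open (Us := [:: U]) (fun W h => match h with
       | or_introl e => eq_ind U open oU W e | or_intror f => False_ind _ f end))
    (vbase_open (Us := [:: V]) (fun W h => match h with
       | or_introl e => eq_ind V open oV W e | or_intror f => False_ind _ f end))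
    (ex_intro _ _ (vb1 U x s1 Ux)) (ex_intro _ _ (vb1 V y s1' Vy)).
  have [[t zt] [s [_ es]]] := proj2_sig z.
  have inv : forall u, proj1_sig z u -> proj1_sig z (iter m f u).
    move=> u zu; rewrite -em Fn_iter; by exists u.
  have [i [p [p0 ep]]] := fin_periodic es inv zt.
  set w := iter i (iter m f) t in ep.
  have zw : proj1_sig z w by rewrite /w; elim: i {w ep} => //= i IH; exact: inv.
  exists w; split.
    by have [W [[<-|[]] Ww]] := Uz.1 w zw.
  split.
    by exists (p * m)%N; rewrite muln_gt0 p0 m0 iter_mul.
  exists k; have : proj1_sig (iter k (Fn_map f) z) (iter k f w).
    by rewrite Fn_iter; exists w.
  by move/(Vk.1) => [W [[<-|[]] Ww]].
Qed.

Lemma cyl (U : set cantor_space) (x : cantor_space) : open U -> U x ->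
  exists N, forall y : cantor_space, (forall i, (i < N)%N -> y i = x i) -> U y.
Proof.
move=> oU Ux; apply: contrapT => hN.
have : forall N, exists y : cantor_space, (forall i, (i < N)%N -> y i = x i) /\ ~ U y.
  move=> N; apply: contrapT => h; apply: hN; exists N => y hy.
  apply: contrapT => nUy; apply: h; by exists y.
move=> /choice [y hy].
have yc : y @ \oo --> x.
  apply/cvg_sup => i W [V] [[Wo] oW <-] WfN WU.
  by apply: (filterS WU); rewrite nbhs_simpl; exists i.+1 => // j /= ij; rewrite (hy j).1.
have := yc U (open_nbhs_nbhs (conj oU Ux)).
rewrite nbhs_simpl => -[N _ hNU].
by apply: (hy N).2; apply: hNU => /=.
Qed.

Lemma open0 (b : bool) : open [set x : cantor_space | x 0%N = b].
Proof.
have := @open_comp cantor_space bool (fun x => x 0%N) [set b].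
apply => //; last exact: discrete_open.
by move=> x _; exact: (@proj_continuous nat (fun _ => bool) 0%N x).
Qed.

Definition gC (x : cantor_space) : cantor_space :=
  fun i => if i is j.+1 then x j.+2 else ~~ x 0%N.

Lemma iter_gC k x i : iter k gC x i =
  if i is j.+1 then x (j.+1 + k)%N else x 0%N (+) odd k.
Proof.
elim: k i => [|k IH] [|i] /=; rewrite ?addn0 ?addbF //.
- by rewrite IH addbN.
- by rewrite IH addSnnS.
Qed.

Lemma gC_Touhey : Touhey (@open cantor_space) gC.
Proof.
move=> U V oU oV [x Ux] [y Vy].
have [N1 h1] := cyl oU Ux; have [N2 h2] := cyl oV Vy.
pose N := (maxn N1 N2).+1.
have N1N : (N1 < N)%N by rewrite ltnS leq_maxl.
have N2N : (N2 < N)%N by rewrite ltnS leq_maxr.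
pose d : nat := (x 0%N (+) y 0%N (+) odd N).
pose p := (N + d + N)%N.
pose T j := if (j < N)%N then x j.+1 else if (j < N + d)%N then false
            else y (j - (N + d)).+1.
pose z : cantor_space := fun i => if i is j.+1 then T (j %% p) else x 0%N.
exists z; split.
  apply: h1 => -[|i] // hi /=.
  have iN : (i < N)%N by apply: ltn_trans N1N; apply: ltn_trans hi.
  by rewrite modn_small /T ?iN //; rewrite /p; lia.
split.
  exists p.*2; split; first by rewrite double_gt0 /p; lia.
  apply: functional_extensionality_dep => -[|i]; rewrite iter_gC.
    by rewrite odd_double addbF.
  have e : ((i + p.*2) %% p = i %% p)%N by rewrite -addnn addnA !modnDr.
  rewrite addSn; change (T ((i + p.*2) %% p) = T (i %% p)).
  by rewrite e.
exists (N + d)%N; apply: h2 => -[|i] hi; rewrite iter_gC.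
  rewrite oddD /d oddb /z; by case: (x 0%N); case: (y 0%N); case: (odd N).
have iN : (i.+1 < N)%N by apply: ltn_trans N2N.
rewrite addSn; change (T ((i + (N + d)) %% p) = y i.+1).
rewrite modn_small; last by rewrite /p; lia.
rewrite /T ifF; last by apply/negbTE; rewrite -leqNgt; lia.
rewrite ifF; last by apply/negbTE; rewrite -leqNgt; lia.
by congr (y _.+1); lia.
Qed.

Lemma gC_notT : ~ Touhey (@VOpen cantor_space 2) (Fn_map gC).
Proof.
move=> hT.
pose X0 := [set x : cantor_space | x 0%N = false].
pose X1 := [set x : cantor_space | x 0%N = true].
pose c0 : cantor_space := fun _ => false.
pose c1 : cantor_space := fun _ => true.
have o1 : forall U, List.In U [:: X0] -> open U.
  by move=> U [<-|[]]; exact: open0.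
have o2 : forall U, List.In U [:: X0; X1] -> open U.
  by move=> U [<-|[<-|[]]]; exact: open0.
have s1 : (size [:: c0] <= 2)%N by [].
have s2 : (size [:: c0; c1] <= 2)%N by [].
have ne1 : (@vbase cantor_space 2 [:: X0]) !=set0.
  exists (mkFn s1 (mem_head c0 [::])); split => /=.
    by move=> u; rewrite inE => /eqP ->; exists X0; split => //; left.
  by move=> U [<-|[]]; exists c0; rewrite inE eqxx.
have ne2 : (@vbase cantor_space 2 [:: X0; X1]) !=set0.
  exists (mkFn s2 (mem_head c0 [:: c1])); split => /=.
    move=> u; rewrite !inE => /orP[] /eqP ->.
      by exists X0; split => //; left.
    by exists X1; split => //; right; left.
  move=> U [<-|[<-|[]]].
    by exists c0; rewrite inE eqxx.
  by exists c1; rewrite !inE eqxx orbT.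
have [z [Uz [_ [k Vk]]]] := hT _ _ (vbase_open o1) (vbase_open o2) ne1 ne2.
have [a [za Xa]] := Vk.2 X0 (or_introl erefl).
have [b [zb Xb]] := Vk.2 X1 (or_intror (or_introl erefl)).
move: za zb; rewrite Fn_iter => -[a' za' ea] [b' zb' eb].
have [W [[<-|[]] Wa]] := Uz.1 a' za'.
have [W' [[<-|[]] Wb]] := Uz.1 b' zb'.
move: Xa Xb; rewrite /X0 /X1 /= -ea -eb !iter_gC.
by move: Wa Wb; rewrite /X0 /= => -> ->; case: (odd k).
Qed.

Lemma cantor_compactum : compactum cantor_space.
Proof.
split; [exact: cantor_space_compact | exact: cantor_space_hausdorff
       | exact: cantor_perfect |].
by exists (fun _ => false), (fun _ => true) => /(congr1 (fun h => h 0%N)).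
Qed.

Theorem theorem21 :
  (forall (X : topologicalType) (n : nat) (f : X -> X),
      compactum X -> (2 <= n)%N ->
      (Touhey (@VOpen X n) (Fn_map f) <-> Touhey (@SOpen X n) (SFn_map f)) /\
      (Touhey (@VOpen X n) (Fn_map f) -> Touhey (@open X) f)) /\
  (exists (X : topologicalType) (n : nat) (f : X -> X),
      [/\ compactum X, (2 <= n)%N, Touhey (@open X) f
        & ~ Touhey (@VOpen X n) (Fn_map f)]).
Proof.
split; first exact: part1.
exists cantor_space, 2%N, gC; split => //.
- exact: cantor_compactum.
- exact: gC_Touhey.
- exact: gC_notT.
Qed.
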